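(* Let $q$ be a prime power, $n\ge 0$, and $L_q^n$ the lattice of all subspaces of $\mathbb{F}_q^n$ ordered by inclusion and ranked by dimension. Then $$\mathcal{M}(L_q^n,t)=\sum_{0\le i\le j\le k\le n}(-1)^{k-i}\begin{bmatrix}n\\ i,\,j-i,\,k-j,\,n-k\end{bmatrix}_q q^{\binom{j-i}{2}+\binom{k-j}{2}}\,t^{3n-i-j-k}.$$
   Context: $\begin{bmatrix}n\\k\end{bmatrix}_q=\dfrac{(q^n-1)\cdots(q-1)}{(q^k-1)\cdots(q-1)\cdot(q^{n-k}-1)\cdots(q-1)}$ and $\begin{bmatrix}n\\k_1,\dots,k_m\end{bmatrix}_q=\begin{bmatrix}n\\k_1\end{bmatrix}_q\begin{bmatrix}n-k_1\\k_2\end{bmatrix}_q\cdots\begin{bmatrix}n-(k_1+\cdots+k_{m-1})\\k_m\end{bmatrix}_q$. For a finite ranked poset $\mathcal{P}$, $\rho(x,y,z)=3\,\mathrm{rk}(\mathcal{P})-\mathrm{rk}(x)-\mathrm{rk}(y)-\mathrm{rk}(z)$, $\delta_3(x,y,z)=1$ if $x=y=z$ and $0$ otherwise, $J$ is the unique integer-valued function on triples $x\le y\le z$ with $\sum_{x\le a\le y\le b\le z}J(a,y,b)=\delta_3(x,y,z)$ for all $x\le y\le z$, and $\mathcal{M}(\mathcal{P},t)=\sum_{x\le y\le z}J(x,y,z)\,t^{\rho(x,y,z)}$. *)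

(* Defs.v *)
From HB Require Import structures.
From mathcomp Require Import all_boot all_order all_algebra all_field.
Set Implicit Arguments. Unset Strict Implicit. Unset Printing Implicit Defensive.
Import Order.TTheory GRing.Theory Num.Theory.
Local Open Scope ring_scope.

Section RankedPoset.
Variables (T : finType) (le : rel T) (rk : T -> nat).

Definition poset_rank : nat := (\max_(x : T) rk x)%N.

Definition rho3 (x y z : T) : nat := (3 * poset_rank - rk x - rk y - rk z)%N.

Definition delta3 (x y z : T) : int := ((x == y) && (y == z))%:R.

(* J satisfies the defining relation:
   for all x <= y <= z,  sum_{x <= a <= y <= b <= z} J(a,y,b) = delta3(x,y,z).
   J is only meaningful on triples x <= y <= z. *)
Definition J_spec (J : T -> T -> T -> int) : Prop :=
  forall x y z, le x y -> le y z ->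
    \sum_(a : T | le x a && le a y) \sum_(b : T | le y b && le b z) J a y b
      = delta3 x y z.

Definition Mpoly (J : T -> T -> T -> int) : {poly int} :=
  \sum_(x : T) \sum_(y : T | le x y) \sum_(z : T | le y z)
     J x y z *: 'X^(rho3 x y z).
End RankedPoset.

Definition qfact (q : nat) (n : nat) : rat :=
  \prod_(1 <= i < n.+1) ((q ^ i)%:R - 1).

Definition qbinom (q n k : nat) : rat :=
  qfact q n / (qfact q k * qfact q (n - k)).

Fixpoint qmultinom (q n : nat) (ks : seq nat) : rat :=
  match ks with
  | [::] => 1
  | k :: ks' => qbinom q n k * qmultinom q (n - k) ks'
  end.

(* {vspace 'rV[F]_n} is the type of subspaces of F^n; for a finite field
   it is a finite type. *)
Import VectorInternalTheory.
HB.instance Definition _ (F : finFieldType) (n : nat) :=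
  [Finite of {vspace 'rV[F]_n} by <:].

Definition subspace_le (F : finFieldType) (n : nat) : rel {vspace 'rV[F]_n} :=
  fun U V => (U <= V)%VS.

Definition subspace_rk (F : finFieldType) (n : nat) : {vspace 'rV[F]_n} -> nat :=
  fun U => \dim U.

(* Main.v *)
Require Import Defs.
From HB Require Import structures.
From mathcomp Require Import all_boot all_order all_algebra all_field.
From mathcomp Require Import ring zify.
Import Order.TTheory GRing.Theory Num.Theory.
Local Open Scope ring_scope.

Section Count.
Variables (F : finFieldType) (n : nat).
Local Notation V := 'rV[F]_n.
Local Notation T := {vspace V}.
Local Notation q := #|F|.

Lemma card_vs (U : T) : #|U| = (q ^ \dim U)%N.
Proof. exact: card_vspace. Qed.

Lemma dim_add_line (u : T) (v : V) : v \notin u -> \dim (u + <[v]>)%VS = (\dim u).+1.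
Proof.
move=> vu.
have v0 : v != 0 by apply: contraNneq vu => ->; rewrite mem0v.
have := dimv_sum_cap u <[v]>; rewrite dim_vline v0.
suff -> : \dim (u :&: <[v]>)%VS = 0%N by rewrite addn0 addn1.
apply/eqP; rewrite dimv_eq0; apply/eqP.
have : (\dim (u :&: <[v]>) <= \dim <[v]>)%N by apply: dimvS; apply: capvSr.
rewrite dim_vline v0 leq_eqVlt ltnS leqn0 dimv_eq0 => /orP[|/eqP //].
move=> /eqP h; exfalso.
have : (u :&: <[v]> == <[v]>)%VS by rewrite eqEdim capvSr h dim_vline v0.
move=> /eqP e; move: vu; rewrite memvE -e; by rewrite capvSl.
Qed.

Fixpoint cnt (y u : T) (s : nat) : nat :=
  if s is s'.+1 then \sum_(v : V | (v \in y) && (v \notin u)) cnt y (u + <[v]>)%VS s'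
  else 1%N.

Lemma card_diff (y u : T) : (u <= y)%VS ->
  #|[pred v : V | (v \in y) && (v \notin u)]| = (q ^ \dim y - q ^ \dim u)%N.
Proof.
move=> uy; rewrite -!card_vs.
rewrite -(cardID (mem u) (mem y)).
have -> : #|[predI mem y & mem u]| = #|u|.
  apply: eq_card => v; rewrite !inE; apply/andP/idP => [[]//|vu].
  by split => //; move/subvP: uy; apply.
rewrite addKn; apply: eq_card => v; by rewrite !inE andbC.
Qed.

Lemma cnt_val (y : T) s : forall u : T, (u <= y)%VS ->
  cnt y u s = (\prod_(i < s) (q ^ \dim y - q ^ (\dim u + i)))%N.
Proof.
elim: s => [|s IH] u uy /=; first by rewrite big_ord0.
rewrite big_ord_recl addn0.
rewrite (eq_bigr (fun _ => \prod_(i < s) (q ^ \dim y - q ^ (\dim u + bump 0 i)))%N).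
  rewrite sum_nat_const card_diff // mulnC //.
move=> v /andP[vy vu]; rewrite IH; last by rewrite subv_add uy -memvE.
rewrite dim_add_line //; apply: eq_bigr => i _; by rewrite addSnnS.
Qed.


Lemma dim_lt (x a : T) : (x <= a)%VS -> a != x -> (\dim x < \dim a)%N.
Proof.
move=> xa ax; rewrite ltnNge; apply: contra ax => h.
by rewrite eq_sym eqEdim xa.
Qed.

Lemma cnt_split (y : T) s : forall u : T, (u <= y)%VS ->
  cnt y u s = (\sum_(a : T | (u <= a)%VS && (a <= y)%VS && (\dim a == \dim u + s)%N) cnt a u s)%N.
Proof.
elim: s => [|s IH] u uy.
  rewrite (big_pred1 u) // => a /=; rewrite addn0.
  apply/idP/eqP => [/andP[/andP[ua _] /eqP da]|->]; last by rewrite subvv uy eqxx.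
  by apply/eqP; rewrite eq_sym eqEdim ua da leqnn.
rewrite /=.
rewrite (eq_bigr (fun v => \sum_(a : T | ((u + <[v]>)%VS <= a)%VS && (a <= y)%VS && (\dim a == \dim (u + <[v]>)%VS + s)%N) cnt a (u + <[v]>)%VS s)%N); last first.
  by move=> v /andP[vy vu]; rewrite IH // subv_add uy -memvE.
rewrite (exchange_big_dep (fun a : T => (u <= a)%VS && (a <= y)%VS && (\dim a == \dim u + s.+1)%N)); last first.
  move=> v a /andP[vy vu] /andP[/andP[ua ay] da].
  rewrite ay andbT; move: ua; rewrite subv_add => /andP[-> _] /=.
  by rewrite (eqP da) dim_add_line // addSn addnS.
apply: eq_bigr => a /andP[/andP[ua ay] da] /=.
apply: eq_big => [v|v /andP[_ /andP[/andP[ua' _] _]]].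
  apply/andP/andP => [[/andP[vy vu] /andP[/andP[ua' _] _]]|[va vu]].
    by split => //; move: ua'; rewrite subv_add -memvE => /andP[].
  have vy : v \in y by move/subvP: ay; apply.
  split; first by rewrite vy vu.
  by rewrite subv_add ua -memvE va ay (eqP da) dim_add_line // addSn addnS /=.
by [].
Qed.


Lemma q_gt1 : (1 < q)%N.
Proof. exact: finNzRing_gt1. Qed.

Lemma qpow_sub1_neq0 m : (0 < m)%N -> ((q ^ m)%:R - 1 : rat) != 0.
Proof.
move=> m0; rewrite subr_eq0 pnatr_eq1; apply: contraTneq isT => e.
have := ltn_exp2l 0 m q_gt1; rewrite m0 expn0 e ltnn //.
Qed.

Definition Rp (D s : nat) : rat := \prod_(i < s) ((q ^ (D - i))%:R - 1).

Lemma qfact_neq0 D : qfact q D != 0.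
Proof.
rewrite /qfact; rewrite prodf_seq_neq0; apply/allP => i; rewrite mem_iota => /andP[i1 _].
by apply/implyP => _; apply: qpow_sub1_neq0.
Qed.

Lemma Rp_neq0 D s : (s <= D)%N -> Rp D s != 0.
Proof.
move=> sD; rewrite /Rp prodf_seq_neq0; apply/allP => i _; apply/implyP => _.
apply: qpow_sub1_neq0; rewrite subn_gt0; exact: leq_trans (ltn_ord i) sD.
Qed.

Lemma qfactR D s : (s <= D)%N -> qfact q D = qfact q (D - s) * Rp D s.
Proof.
elim: s => [|s IH] sD; first by rewrite subn0 /Rp big_ord0 mulr1.
rewrite IH ?(ltnW sD) // /Rp big_ord_recr /=.
have -> : qfact q (D - s) = qfact q (D - s.+1) * ((q ^ (D - s))%:R - 1).
  have e : (D - s = (D - s.+1).+1)%N by rewrite subnS prednK // subn_gt0.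
  by rewrite e /qfact big_nat_recr.
by rewrite mulrAC -mulrA.
Qed.

Lemma prod_natR r D s : (s <= D)%N ->
  ((\prod_(i < s) (q ^ (r + D) - q ^ (r + i)))%N%:R : rat) =
  (\prod_(i < s) q ^ (r + i))%N%:R * Rp D s.
Proof.
move=> sD; rewrite !natr_prod /Rp -big_split /=; apply: eq_bigr => i _.
have iD : (i <= D)%N by apply: leq_trans (ltnW (ltn_ord i)) sD.
rewrite natrB; last by rewrite leq_pexp2l ?leq_add2l // ltnW // q_gt1.
have -> : (r + D = (r + i) + (D - i))%N by rewrite -addnA subnKC.
by rewrite expnD natrM mulrBr mulr1.
Qed.

Definition Ncount (x y : T) (k : nat) : nat :=
  #|[pred a : T | (x <= a)%VS && (a <= y)%VS && (\dim a == k)]|.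

Lemma Ncount_nat (x y : T) s : (x <= y)%VS ->
  (\prod_(i < s) (q ^ \dim y - q ^ (\dim x + i)))%N =
  (Ncount x y (\dim x + s) * \prod_(i < s) (q ^ (\dim x + s) - q ^ (\dim x + i)))%N.
Proof.
move=> xy; rewrite -cnt_val // cnt_split //.
rewrite (eq_bigr (fun _ => \prod_(i < s) (q ^ (\dim x + s) - q ^ (\dim x + i)))%N).
  by rewrite sum_nat_const.
move=> a /andP[/andP[xa _] /eqP da]; rewrite cnt_val // da //.
Qed.

Lemma Ncount_qbinom (x y : T) k : (x <= y)%VS -> (\dim x <= k <= \dim y)%N ->
  (Ncount x y k)%:R = qbinom q (\dim y - \dim x) (k - \dim x).
Proof.
move=> xy /andP[xk ky].
set r := \dim x; set D := (\dim y - r)%N; set s := (k - r)%N.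
have sD : (s <= D)%N by rewrite leq_sub2r.
have := Ncount_nat x y s xy.
have -> : \dim y = (r + D)%N by rewrite subnKC // dimvS.
have -> : (r + s = k)%N by rewrite subnKC.
move=> /(congr1 (fun m => m%:R : rat)).
rewrite natrM -{2}(subnKC xk) -/s prod_natR // prod_natR //.
set A := (_%:R : rat) => h.
have A0 : A != 0.
  by rewrite /A pnatr_eq0 -lt0n prodn_gt0 // => i; rewrite expn_gt0 (ltnW q_gt1).
have {h} h : Rp D s = (Ncount x y k)%:R * Rp s s.
  by apply: (mulfI A0); rewrite h mulrCA.
rewrite /qbinom (qfactR D s sD) (qfactR s s (leqnn s)) subnn h.
have : qfact q 0 = 1 by rewrite /qfact big_nil.
move=> ->; rewrite mul1r.
have := Rp_neq0 s s (leqnn s); have := qfact_neq0 (D - s).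
move=> h1 h2; field; by rewrite h1 h2.
Qed.


Definition mu (d : nat) : rat := (-1) ^+ d * (q ^ 'C(d, 2))%:R.

Lemma qfact0 : qfact q 0 = 1.
Proof. by rewrite /qfact big_nil. Qed.

Lemma qfactS m : qfact q m.+1 = qfact q m * ((q ^ m.+1)%:R - 1).
Proof. by rewrite /qfact big_nat_recr. Qed.

Lemma qbinom_nn D : qbinom q D D = 1.
Proof. by rewrite /qbinom subnn qfact0 mulr1 divff // qfact_neq0. Qed.

Lemma qbinom_n0 D : qbinom q D 0 = 1.
Proof. by rewrite /qbinom subn0 qfact0 mul1r divff // qfact_neq0. Qed.

Lemma qbinom_sym D j : (j <= D)%N -> qbinom q D (D - j) = qbinom q D j.
Proof. by move=> jD; rewrite /qbinom subKn // [qfact q j * _]mulrC. Qed.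

Lemma qpascal D k : (k < D)%N ->
  qbinom q D.+1 k.+1 = (q ^ (D - k))%:R * qbinom q D k + qbinom q D k.+1.
Proof.
move=> kD; rewrite /qbinom subSS.
have e : (D - k = (D - k.+1).+1)%N by rewrite subnS prednK // subn_gt0.
rewrite !qfactS e qfactS -e.
have eq : (q ^ D.+1 = q ^ (D - k) * q ^ k.+1)%N by rewrite -expnD addnS subnK // ltnW.
rewrite eq natrM.
have h1 := qfact_neq0 k; have h2 := qfact_neq0 D; have h3 := qfact_neq0 (D - k.+1).
have h4 : ((q ^ (D - k))%:R - 1 : rat) != 0 by apply: qpow_sub1_neq0; rewrite subn_gt0.
have h5 : ((q ^ k.+1)%:R - 1 : rat) != 0 by apply: qpow_sub1_neq0.
field; by rewrite ?h1 ?h2 ?h3 ?h4 ?h5.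
Qed.

Lemma muS j : mu j.+1 = - (q ^ j)%:R * mu j.
Proof.
rewrite /mu binS bin1 exprS expnD natrM; ring.
Qed.

Definition gq (D : nat) : rat := \sum_(j < D.+1) qbinom q D j * mu j.

Lemma mu0 : mu 0 = 1.
Proof. by rewrite /mu expr0 mul1r. Qed.

Lemma gqS D : gq D.+1 = (1 - (q ^ D)%:R) * gq D.
Proof.
have e1 : \sum_(i < D) qbinom q D i * mu i = gq D - mu D.
  by rewrite /gq big_ord_recr qbinom_nn mul1r addrK.
have e2 : \sum_(i < D) qbinom q D i.+1 * mu i.+1 = gq D - 1.
  rewrite /gq big_ord_recl qbinom_n0 mu0 mul1r addrAC subrr add0r.
  by apply: eq_bigr => i _; rewrite lift0.
have e3 : \sum_(i < D.+1) qbinom q D.+1 (lift ord0 i) * mu (lift ord0 i) =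
    \sum_(i < D) ((q ^ (D - i))%:R * qbinom q D i * mu i.+1 + qbinom q D i.+1 * mu i.+1) + mu D.+1.
  rewrite big_ord_recr lift0 qbinom_nn mul1r; congr (_ + _).
  by apply: eq_bigr => i _; rewrite lift0 /= (qpascal D i (ltn_ord i)) mulrDl.
rewrite /gq big_ord_recl qbinom_n0 mu0 mul1r e3 big_split /=.
rewrite (eq_bigr (fun i : 'I_D => - (q ^ D)%:R * (qbinom q D i * mu i))); last first.
  move=> i _; rewrite muS.
  have -> : (q ^ D = q ^ (D - i) * q ^ i)%N by rewrite -expnD subnK // ltnW.
  rewrite natrM; ring.
rewrite -mulr_sumr -/(gq D) e1 e2 muS; ring.
Qed.

Lemma gq_val D : gq D = (D == 0)%:R.
Proof.
elim: D => [|D IH]; first by rewrite /gq big_ord_recl big_ord0 qbinom_n0 /mu /= !mul1r addr0.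
rewrite gqS IH; case: D {IH} => [|D] /=; first by rewrite expn0 subrr mul0r.
by rewrite mulr0.
Qed.

Lemma gq_rev D : \sum_(j < D.+1) qbinom q D j * mu (D - j) = (D == 0)%:R.
Proof.
rewrite -gq_val /gq (reindex_inj rev_ord_inj) /=; apply: eq_bigr => i _.
rewrite subSS subKn ?qbinom_sym //; by rewrite -ltnS.
Qed.


Lemma sum_if_nat (W : nmodType) (m p j : nat) (g : nat -> W) : (m <= j < p)%N ->
  \sum_(m <= k < p) (if k == j then g k else 0) = g j.
Proof.
move=> jr; rewrite (bigD1_seq j) ?mem_index_iota //; last by rewrite /index_iota iota_uniq.
rewrite eqxx big1; first exact: addr0.
by move=> k /negPf ->.
Qed.

Lemma group_dim (W : nmodType) (x y : T) (g : nat -> W) : (x <= y)%VS ->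
  \sum_(a : T | (x <= a)%VS && (a <= y)%VS) g (\dim a) =
  \sum_(\dim x <= k < (\dim y).+1) g k *+ Ncount x y k.
Proof.
move=> xy.
rewrite (eq_bigr (fun a : T => \sum_(\dim x <= k < (\dim y).+1) (if k == \dim a then g k else 0))); last first.
  move=> a /andP[xa ay]; rewrite sum_if_nat // ltnS !dimvS //.
rewrite exchange_big; apply: eq_bigr => k _.
rewrite -big_mkcondr /Ncount -sumr_const; apply: eq_bigl => a.
by rewrite !inE eq_sym.
Qed.


Lemma shift_sum (W : nmodType) (x y : T) (h : nat -> nat -> W) : (x <= y)%VS ->
  \sum_(\dim x <= k < (\dim y).+1) h k (Ncount x y k) =
  \sum_(i < (\dim y - \dim x).+1) h (i + \dim x)%N (Ncount x y (i + \dim x)).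
Proof.
move=> xy; rewrite -{1}(add0n (\dim x)) big_addn big_mkord.
by rewrite subSn // dimvS.
Qed.

Lemma muL (x y : T) : (x <= y)%VS ->
  \sum_(a : T | (x <= a)%VS && (a <= y)%VS) mu (\dim y - \dim a) = (x == y)%:R.
Proof.
move=> xy; rewrite (@group_dim _ x y (fun k => mu (\dim y - k)) xy).
rewrite (@shift_sum _ x y (fun k N => mu (\dim y - k) *+ N) xy).
have dxy : (\dim x <= \dim y)%N by rewrite dimvS.
rewrite (eq_bigr (fun i : 'I_(\dim y - \dim x).+1 => qbinom q (\dim y - \dim x) i * mu (\dim y - \dim x - i))).
  rewrite gq_rev; congr (_%:R); rewrite eqEdim xy subn_eq0 //.
move=> i _; rewrite -mulr_natl Ncount_qbinom //; last first.
  by have := ltn_ord i; lia.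
rewrite addnK; congr (_ * mu _); lia.
Qed.

Lemma muR (y z : T) : (y <= z)%VS ->
  \sum_(b : T | (y <= b)%VS && (b <= z)%VS) mu (\dim b - \dim y) = (y == z)%:R.
Proof.
move=> yz; rewrite (@group_dim _ y z (fun k => mu (k - \dim y)) yz).
rewrite (@shift_sum _ y z (fun k N => mu (k - \dim y) *+ N) yz).
have dyz : (\dim y <= \dim z)%N by rewrite dimvS.
rewrite (eq_bigr (fun i : 'I_(\dim z - \dim y).+1 => qbinom q (\dim z - \dim y) i * mu i)).
  rewrite -/(gq _) gq_val; congr (_%:R); rewrite eqEdim yz subn_eq0 //.
move=> i _; rewrite -mulr_natl Ncount_qbinom //; last first.
  by have := ltn_ord i; lia.
by rewrite addnK.
Qed.


Definition mui (d : nat) : int := (-1) ^+ d * (q ^ 'C(d, 2))%:R.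

Lemma mui_rat d : (mui d)%:~R = mu d.
Proof. by rewrite /mui rmorphM rmorphXn rmorphN1 rmorph_nat. Qed.

Definition J0 (a y b : T) : int := mui (\dim y - \dim a) * mui (\dim b - \dim y).

Lemma J0_spec : J_spec (@subspace_le F n) J0.
Proof.
move=> x y z; rewrite /subspace_le => xy yz; apply: (@intr_inj rat).
rewrite rmorph_sum /=.
rewrite (eq_bigr (fun a => mu (\dim y - \dim a) * \sum_(b : T | (y <= b)%VS && (b <= z)%VS) mu (\dim b - \dim y))); last first.
  move=> a _; rewrite rmorph_sum mulr_sumr; apply: eq_bigr => b _.
  by rewrite rmorphM; congr (_ * _); apply: mui_rat.
rewrite -mulr_suml muL // muR // /delta3 rmorph_nat -mulnb natrM //.
Qed.

Lemma J_unique (J : T -> T -> T -> int) : J_spec (@subspace_le F n) J ->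
  forall x y z, (x <= y)%VS -> (y <= z)%VS -> J x y z = J0 x y z.
Proof.
move=> hJ x y z xy yz.
pose D a b := J a y b - J0 a y b.
have hD : forall x z, (x <= y)%VS -> (y <= z)%VS ->
    \sum_(a : T | (x <= a)%VS && (a <= y)%VS) \sum_(b : T | (y <= b)%VS && (b <= z)%VS) D a b = 0.
  move=> x' z' xy' yz'; rewrite /D.
  rewrite (eq_bigr (fun a => \sum_(b : T | (y <= b)%VS && (b <= z')%VS) J a y b - \sum_(b : T | (y <= b)%VS && (b <= z')%VS) J0 a y b)); last by move=> a _; rewrite sumrB.
  rewrite sumrB.
  have := hJ x' y z' xy' yz'; have := J0_spec x' y z' xy' yz'; rewrite /subspace_le => -> ->.
  by rewrite subrr.
suff : forall t x z, (\dim z - \dim x < t)%N -> (x <= y)%VS -> (y <= z)%VS -> D x z = 0.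
  by move=> /(_ (\dim z - \dim x).+1 x z (ltnSn _) xy yz) /eqP; rewrite subr_eq0 => /eqP.
elim=> [//|t IH] x' z' ht xy' yz'.
have h0 := hD x' z' xy' yz'.
have hx : (x' <= x' <= y)%VS by rewrite subvv xy'.
have hz : (y <= z' <= z')%VS by rewrite subvv yz'.
rewrite (bigD1 x' hx) (bigD1 z' hz) /= in h0.
have S1 : \sum_(b | (y <= b <= z')%VS && (b != z')) D x' b = 0.
  apply: big1 => b /andP[/andP[yb bz] bz'].
  apply: IH => //.
  rewrite eq_sym in bz'; have := dim_lt _ _ bz bz'; have := dimvS yb; have := dimvS xy'; lia.
have S2 : \sum_(a | (x' <= a <= y)%VS && (a != x')) \sum_(b | (y <= b <= z')%VS) D a b = 0.
  apply: big1 => a /andP[/andP[xa ay] ax].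
  apply: big1 => b /andP[yb bz]; apply: IH => //.
  have := dim_lt _ _ xa ax; have := dimvS bz; have := dimvS ay; have := dimvS yb; lia.
by move: h0; rewrite S1 S2 !addr0.
Qed.


Lemma dimfull : \dim (fullv : T) = n.
Proof. by rewrite dimvf /dim /= mul1n. Qed.

Lemma prank : poset_rank (@subspace_rk F n) = n.
Proof.
apply/eqP; rewrite eqn_leq; apply/andP; split.
  apply/bigmax_leqP => x _; rewrite /subspace_rk; apply: leq_trans (dimvS (subvf x)) _; by rewrite dimfull.
by apply: leq_trans (leq_bigmax (fullv : T)); rewrite /subspace_rk dimfull.
Qed.

Lemma group_q (x y : T) (g : nat -> {poly rat}) : (x <= y)%VS ->
  \sum_(a : T | (x <= a)%VS && (a <= y)%VS) g (\dim a) =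
  \sum_(\dim x <= k < (\dim y).+1) qbinom q (\dim y - \dim x) (k - \dim x) *: g k.
Proof.
move=> xy; rewrite (@group_dim _ x y g xy); apply: eq_big_nat => k hk.
by rewrite -Ncount_qbinom // ?scaler_nat // -ltnS.
Qed.


End Count.

Theorem proposition6p12 (F : finFieldType) (n : nat) :
  let q := #|F| in
  let T := {vspace 'rV[F]_n} in
  (exists J : T -> T -> T -> int,
      J_spec (@subspace_le F n) J) /\
  (forall J : T -> T -> T -> int,
      J_spec (@subspace_le F n) J ->
      map_poly (fun z : int => z%:~R : rat)
        (Mpoly (@subspace_le F n) (@subspace_rk F n) J)
      = \sum_(0 <= i < n.+1) \sum_(i <= j < n.+1) \sum_(j <= k < n.+1)
          ((-1) ^+ (k - i)%N * qmultinom q n [:: i; (j - i)%N; (k - j)%N; (n - k)%N]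
            * (q ^ ('C(j - i, 2) + 'C(k - j, 2)))%:R) *: 'X^(3 * n - i - j - k)).
Proof.
move=> q T; split; first by exists (@J0 F n); exact: J0_spec.
move=> J hJ.
pose G (i j k : nat) : {poly rat} :=
  (mu F (j - i) * mu F (k - j)) *: 'X^(3 * n - i - j - k).
rewrite /Mpoly rmorph_sum.
rewrite (eq_bigr (fun x : T => \sum_(y : T | (x <= y)%VS) \sum_(z : T | (y <= z)%VS)
   G (\dim x) (\dim y) (\dim z))); last first.
  move=> x _; rewrite rmorph_sum; apply: eq_bigr => y xy; rewrite rmorph_sum.
  apply: eq_bigr => z yz.
  rewrite (@J_unique F n J hJ x y z xy yz) /= map_polyZ map_polyXn /rho3 prank /subspace_rk /=.
  by rewrite /J0 rmorphM /= !mui_rat.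
pose H (i j : nat) := \sum_(j <= k < n.+1) qbinom q (n - j) (k - j) *: G i j k.
pose K (i : nat) := \sum_(i <= j < n.+1) qbinom q (n - i) (j - i) *: H i j.
have full (P : pred T) (g : T -> {poly rat}) :
    \sum_(a : T | P a) g a = \sum_(a : T | P a && (a <= fullv)%VS) g a.
  by apply: eq_bigl => a; rewrite subvf andbT.
rewrite (eq_bigr (fun x : T => K (\dim x))); last first.
  move=> x _.
  rewrite (eq_bigr (fun y : T => H (\dim x) (\dim y))); last first.
    move=> y _; rewrite full (@group_q F n y fullv (fun k => G (\dim x) (\dim y) k) (subvf y)).
    by rewrite dimfull.
  by rewrite full (@group_q F n x fullv (fun j => H (\dim x) j) (subvf x)) dimfull.
rewrite full.
rewrite (eq_bigl (fun a : T => (0 <= a)%VS && (a <= fullv)%VS)); last by move=> a; rewrite sub0v.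
rewrite (@group_q F n 0 fullv K (subvf 0)) dimfull dimv0.
apply: eq_big_nat => i /andP[_ hi].
rewrite /K scaler_sumr; apply: eq_big_nat => j /andP[ij hj].
rewrite /H scaler_sumr !scaler_sumr; apply: eq_big_nat => k /andP[jk hk].
rewrite /G !scalerA; congr (_ *: _).
rewrite /= !subn0.
have e1 : (n - i - (j - i) = n - j)%N by lia.
have e2 : (n - j - (k - j) = n - k)%N by lia.
have e3 : (k - i = (j - i) + (k - j))%N by lia.
rewrite e1 e2 e3 qbinom_nn /mu exprD expnD natrM -/q; ring.
Qed.
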